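(* Let $k\ge 10$, and consider the procedure $\mathcal{A}$ (described in the context) started on an input $(\mathcal{L},\ell,\tau)$ with $\mathrm{rank}(\mathcal{L})=n\ge k$, $\tau\ge0$ and $1\le\ell\le n-k+1$. Then the total number of invocations of $\mathcal{A}$ made during the whole recursion is at most $4^{\tau}\cdot p(n)$ for a fixed polynomial $p$ (independent of $\mathcal{L},\ell,\tau,k$).
   Context: Notation: for a lattice $\mathcal{L}$, $\mathcal{L}^*$ is its dual lattice, and for a lattice $\mathcal{M}$, $\mathcal{M}^\perp$ is the orthogonal complement of $\mathrm{span}(\mathcal{M})$; for a rank-$r$ sublattice $\mathcal{M}\subseteq \mathcal{L}^*$, $\mathcal{L}\cap\mathcal{M}^\perp$ has rank $\mathrm{rank}(\mathcal{L})-r$. Sublattices returned by $\mathcal{A}(\mathcal{L},\ell,\tau)$ have rank $\ell$. Procedure $\mathcal{A}(\mathcal{L},\ell,\tau)$, with $n:=\mathrm{rank}(\mathcal{L})$ and $n>\ell\ge1$, $\tau\ge 0$ integers: 1. Duality step: if $\max\{1,(n-k)/5\}<\ell<n/2$ or $\ell\ge n-\max\{1,(n-k)/10\}$, output $\mathcal{L}\cap\mathcal{A}(\mathcal{L}^*,n-\ell,\tau)^\perp$. 2. Base cases: (a) if $n=k$ and $\ell=1$, call an HSVP oracle on $\mathcal{L}$ and output the lattice generated by the returned vector; (b) if $\tau=0$, output the lattice generated by the first $\ell$ vectors of an LLL-reduced basis of $\mathcal{L}$. 3. Recursive step: otherwise set $\ell^*=\lceil (n-k)/20\rceil$, $b=1$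 if $\ell<n/2$ and $b=0$ otherwise, compute $\mathcal{M}:=\mathcal{A}(\mathcal{L}^*,\ell^*,\tau-b)$ and output $\mathcal{A}(\mathcal{L}\cap\mathcal{M}^\perp,\ell,\tau)$. The sequence of parameters $(n,\ell,\tau)$ of the invocations depends only on the initial parameters. *)

(* Defs.v *)
From mathcomp Require Import all_boot all_order all_algebra.
Set Implicit Arguments. Unset Strict Implicit. Unset Printing Implicit Defensive.
Import Order.TTheory GRing.Theory Num.Theory.

(* The call tree of procedure A depends only on the parameters (n, l, tau)
   (and the fixed block size k).  [calls k n l t N] means: the invocation
   A(L, l, t) with rank(L) = n terminates and makes N invocations in total
   (counting itself and all recursive invocations). *)

Local Open Scope ring_scope.

Definition dual_cond (k n l : nat) : bool :=
  ((Num.max 1 ((n%:Q - k%:Q) / 5%:Q) < l%:Q) && (l%:Q < n%:Q / 2%:Q))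
  || (n%:Q - Num.max 1 ((n%:Q - k%:Q) / 10%:Q) <= l%:Q).

Definition lstar (k n : nat) : nat := `|Num.ceil ((n%:Q - k%:Q) / 20%:Q)|%N.

Definition bflag (n l : nat) : nat := if l%:Q < n%:Q / 2%:Q then 1%N else 0%N.

Local Close Scope ring_scope.

Inductive calls (k : nat) : nat -> nat -> nat -> nat -> Prop :=
| calls_dual n l t N :
    dual_cond k n l ->
    calls k n (n - l) t N ->           (* A(Ldual, n - l, t), rank(Ldual) = n *)
    calls k n l t N.+1
| calls_baseA n l t :
    ~~ dual_cond k n l -> n = k -> l = 1 ->
    calls k n l t 1
| calls_baseB n l t :
    ~~ dual_cond k n l -> ~ (n = k /\ l = 1) -> t = 0 ->
    calls k n l t 1
| calls_rec n l t N1 N2 :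
    ~~ dual_cond k n l -> ~ (n = k /\ l = 1) -> t <> 0 ->
    calls k n (lstar k n) (t - bflag n l) N1 ->   (* M := A(Ldual, l*, t-b) *)
    calls k (n - lstar k n) l t N2 ->              (* A(L cap M^perp, l, t) *)
    calls k n l t (N1 + N2).+1.

(* Main.v *)
Require Import Defs.
From mathcomp Require Import all_boot all_order all_algebra.
From mathcomp Require Import zify ring lra.
Import Order.TTheory GRing.Theory Num.Theory.

Definition dn (k n l : nat) : bool :=
  [&& (1 < l)%N, (n - k < 5 * l)%N & (2 * l < n)%N] || (n <= l.+1)%N || (10 * n <= 10 * l + (n - k))%N.
Definition Inv k n l := [/\ (k <= n)%N, (0 < l)%N, (l < n)%N & (l <= n - k + 1)%N || (k - 1 <= l)%N].

Lemma inv_dual k n l : 10 <= k -> Inv k n l -> dn k n l -> Inv k n (n - l).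
Proof. rewrite /Inv /dn => ? [] *; (try split); lia. Qed.
Lemma inv_dual2 k n l : 10 <= k -> Inv k n l -> dn k n l -> ~~ dn k n (n - l).
Proof. rewrite /Inv /dn => ? [] *; lia. Qed.
Lemma rec_m k n l : 10 <= k -> Inv k n l -> ~~ dn k n l -> ~ (n = k /\ l = 1) -> k < n.
Proof. rewrite /Inv /dn => ? [] *; lia. Qed.
Lemma inv_sub1 k n l : 10 <= k -> Inv k n l -> k < n -> Inv k n ((n - k + 19) %/ 20).
Proof. rewrite /Inv /dn => ? [] *; (try split); lia. Qed.
Lemma inv_sub1b k n l : 10 <= k -> Inv k n l -> k < n -> ~~ dn k n ((n - k + 19) %/ 20).
Proof. rewrite /Inv /dn => ? [] *; lia. Qed.
Lemma inv_sub1c k n : 10 <= k -> k < n -> 2 * ((n - k + 19) %/ 20) < n.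
Proof. lia. Qed.
Lemma inv_sub2 k n l : 10 <= k -> Inv k n l -> ~~ dn k n l -> k < n ->
  Inv k (n - (n - k + 19) %/ 20) l.
Proof. rewrite /Inv /dn => ? [] *; (try split); lia. Qed.
Lemma key_ratio k n : k < n -> 21 * (n - (n - k + 19) %/ 20 - k + 1) <= 20 * (n - k + 1).
Proof. lia. Qed.

Section RatPart.
Local Open Scope ring_scope.
Lemma dualE k n l : (k <= n)%N -> dual_cond k n l = dn k n l.
Proof.
move=> kn; rewrite /dual_cond /dn -!pmulrn -natrB //.
set m := (n - k)%N.
have E1 : (Num.max 1 (m%:R / 5%:R) < l%:R :> rat) = (1 < l)%N && (m < 5 * l)%N.
  by rewrite gt_max ltr1n ltr_pdivrMr ?ltr0n // -natrM ltr_nat mulnC.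
have E2 : (l%:R < n%:R / 2%:R :> rat) = (2 * l < n)%N.
  by rewrite ltr_pdivlMr ?ltr0n // -natrM ltr_nat mulnC.
have E3 : (n%:R - Num.max 1 (m%:R / 10%:R) <= l%:R :> rat) = (n <= l.+1)%N || (10 * n <= 10 * l + m)%N.
  rewrite lerBlDr; apply/idP/idP.
    case: (leP 1 (m%:R / 10%:R :> rat)) => h.
      move=> h2; apply/orP; right.
      have : (n%:R * 10%:R <= (l%:R + m%:R / 10%:R) * 10%:R :> rat).
        by rewrite ler_pM2r ?ltr0n.
      rewrite mulrDl mulfVK ?pnatr_eq0 // -!natrM -natrD ler_nat; lia.
    by rewrite natr1 ler_nat => ->.
  have hm1 : 1 <= Num.max 1 (m%:R/10%:R :> rat) by rewrite le_max lexx.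
  have hm2 : m%:R/10%:R <= Num.max 1 (m%:R/10%:R :> rat) by rewrite le_max lexx orbT.
  case/orP => h.
    apply: le_trans (lerD (lexx _) hm1); rewrite natr1 ler_nat //.
  apply: le_trans (lerD (lexx _) hm2).
  rewrite -(ler_pM2r (_ : 0 < 10%:R :> rat)) ?ltr0n // mulrDl mulfVK ?pnatr_eq0 //.
  rewrite -!natrM -natrD ler_nat; lia.
rewrite E1 E2 -andbA -orbA; congr (_ || _); exact: E3.
Qed.

Lemma bflagE n l : bflag n l = if (2 * l < n)%N then 1%N else 0%N.
Proof. by rewrite /bflag ltr_pdivlMr ?ltr0n // -natrM ltr_nat mulnC. Qed.

Lemma aux_ceil (x y : rat) : 20*x <= y+19 -> y <= 20*x -> (x-1)*20 < y /\ y <= x*20.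
Proof. move=> *; split; lra. Qed.

Lemma lstarE k n : (k <= n)%N -> lstar k n = ((n - k + 19) %/ 20)%N.
Proof.
move=> kn; rewrite /lstar -natrB //.
set m := (n - k)%N; set c := ((m + 19) %/ 20)%N.
have h1 : (20 * c <= m + 19)%N by rewrite mulnC leq_divM.
have h2 : (m + 19 < 20 * c + 20)%N by rewrite /c; lia.
rewrite (@ceil_def _ _ c%:Z) //.
have H1 : 20 * c%:R <= m%:R + 19 :> rat.
  by move: h1; rewrite -(ler_nat rat) natrM natrD.
have H2 : m%:R <= 20 * c%:R :> rat.
  by rewrite -natrM ler_nat; lia.
rewrite -[X in _ / X]/(20%:R : rat) intrB /= -!pmulrn.
apply/andP; split; [rewrite ltr_pdivlMr ?ltr0n // | rewrite ler_pdivrMr ?ltr0n //].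
  by case: (@aux_ceil _ _ H1 H2).
by case: (@aux_ceil _ _ H1 H2).
Qed.
Lemma c3 : (20/21 : rat) ^+ 3 <= 7/8.
Proof. rewrite !exprS expr0. lra. Qed.
Lemma c3' : 0 <= (20/21 : rat) ^+ 3.
Proof. rewrite !exprS expr0. lra. Qed.
Lemma c8 : (7/8 : rat) ^+ 8 <= 7/20.
Proof. rewrite !exprS expr0. lra. Qed.
Lemma c24 : (20/21 : rat) ^+ 24 <= 7/20.
Proof.
have -> : (24 = 3 * 8)%N by [].
rewrite exprM.
apply: le_trans c8.
apply: lerXn2r; first exact: c3'.
  rewrite nnegrE; lra.
exact: c3.
Qed.
Lemma c2 (b : rat) : 2 <= b -> 128 <= b ^+ 24.
Proof.
move=> b2.
have h3 : (128 : rat) <= 2 ^+ 7 by rewrite !exprS expr0; lra.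
have h : (2 : rat) ^+ 7 <= b ^+ 7.
  by apply: lerXn2r; rewrite ?nnegrE; lra.
have h1 : 1 <= b ^+ 17 by apply: exprn_ege1; lra.
have h0 : 0 <= b ^+ 7 by apply: exprn_ge0; lra.
have h2 : b ^+ 7 * 1 <= b ^+ 7 * b ^+ 17 by apply: ler_wpM2l.
rewrite mulr1 -exprD in h2; change (is_true (b ^+ 7 <= b ^+ 24)) in h2.
exact: le_trans (le_trans h3 h) h2.
Qed.
Lemma Hkey (a b : rat) : 0 <= a -> 2 <= b -> 21 * a <= 20 * b ->
  8 * (a ^+ 24 + 3) <= 3 * b ^+ 24.
Proof.
move=> a0 b2 ab.
have h1 : a ^+ 24 <= (20/21 * b) ^+ 24.
  by apply: lerXn2r; rewrite ?nnegrE; lra.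
rewrite exprMn in h1.
have hb : 0 <= b ^+ 24 by apply: exprn_ge0; lra.
have h3 : (20/21 : rat) ^+ 24 * b ^+ 24 <= 7/20 * b ^+ 24.
  by apply: ler_wpM2r; [exact: hb | exact: c24].
have h4 := @c2 b b2.
have h5 := le_trans h1 h3.
clear h1 h3.
move: h5 h4 hb; set x := a ^+ 24; set y := b ^+ 24; clearbody x y => *.
lra.
Qed.
End RatPart.
Section MainPart.
Local Open Scope ring_scope.

Definition H (m : nat) : rat := ((m + 1)%N%:R) ^+ 24 + 1.
Definition B k n l : rat :=
  if dn k n l then H (n - k) else if (2 * l < n)%N then H (n - k) / 2 else H (n - k) - 1.

Lemma H_ge2 m : 2 <= H m.
Proof.
rewrite /H; have : 1 <= (m + 1)%N%:R ^+ 24 :> rat.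
  by apply: exprn_ege1; rewrite ler1n; lia.
set x := _ ^+ 24; clearbody x => ?; lra.
Qed.

Lemma B_le k n l : B k n l <= H (n - k).
Proof. have := H_ge2 (n - k); rewrite /B; case: ifP => _; [lra|case: ifP => _; lra]. Qed.

Lemma B_nd k n l : ~~ dn k n l -> B k n l <= H (n - k) - 1.
Proof. have := H_ge2 (n - k); rewrite /B => h /negbTE ->; case: ifP => _; lra. Qed.

Lemma B_ge1 k n l : 1 <= B k n l.
Proof. have := H_ge2 (n - k); rewrite /B; case: ifP => _; [lra|case: ifP => _; lra]. Qed.

Lemma Hstep k n : (10 <= k)%N -> (k < n)%N ->
  8 * (H (n - (n - k + 19) %/ 20 - k) + 2) <= 3 * H (n - k).
Proof.
move=> k10 kn; rewrite /H.
have r := @key_ratio k n kn.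
have hk := @Hkey ((n - (n - k + 19) %/ 20 - k + 1)%N%:R) ((n - k + 1)%N%:R).
have h1 : 0 <= (n - (n - k + 19) %/ 20 - k + 1)%N%:R :> rat by apply: ler0n.
have h2 : 2 <= (n - k + 1)%N%:R :> rat by rewrite ler_nat; lia.
have h3 : 21 * (n - (n - k + 19) %/ 20 - k + 1)%N%:R <= 20 * (n - k + 1)%N%:R :> rat.
  by move: r; rewrite -(ler_nat rat) !natrM.
have := hk h1 h2 h3.
set a := _ ^+ 24; set b := _ ^+ 24; clearbody a b => ?; lra.
Qed.

End MainPart.
Section BoundPart.
Local Open Scope ring_scope.

Lemma bound k n l t N : (10 <= k)%N -> calls k n l t N -> Inv k n l ->
  N%:R <= 4%:R ^+ t * B k n l.
Proof.
move=> k10 hc; elim: hc => {n l t N}.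
- move=> n l t N dc hc IH inv.
  have kn : (k <= n)%N by case: inv.
  rewrite dualE // in dc.
  have IH' := IH (@inv_dual k n l k10 inv dc).
  have hb := @B_nd k n (n - l) (@inv_dual2 k n l k10 inv dc).
  have hB : B k n l = H (n - k) by rewrite /B dc.
  rewrite hB.
  have hX : 1 <= 4%:R ^+ t :> rat by apply: exprn_ege1; rewrite ler1n.
  have hm := ler_wpM2l (le_trans ler01 hX) hb.
  rewrite -addn1 natrD.
  move: IH' hm hX; set X := 4%:R ^+ t; set Y := B _ _ _; set Z := H _.
  clearbody X Y Z => *; nra.
- move=> n l t _ _ _.
  have hX : 1 <= 4%:R ^+ t :> rat by apply: exprn_ege1; rewrite ler1n.
  by move=> _; apply: mulr_ege1 => //; apply: B_ge1.
- move=> n l t _ _ _.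
  have hX : 1 <= 4%:R ^+ t :> rat by apply: exprn_ege1; rewrite ler1n.
  by move=> _; apply: mulr_ege1 => //; apply: B_ge1.
- move=> n l t N1 N2 nd nb tn hc1 IH1 hc2 IH2 inv.
  have kn : (k <= n)%N by case: inv.
  rewrite dualE // in nd.
  have kn' : (k < n)%N by apply: (@rec_m k n l k10 inv nd nb).
  rewrite lstarE // in IH1 IH2.
  set c := ((n - k + 19) %/ 20)%N in IH1 IH2.
  have I1 := IH1 (@inv_sub1 k n l k10 inv kn').
  have I2 := IH2 (@inv_sub2 k n l k10 inv nd kn').
  have nd1 := @inv_sub1b k n l k10 inv kn'.
  have c2 := @inv_sub1c k n k10 kn'.
  have hB1 : B k n c = H (n - k) / 2 by rewrite /B (negbTE nd1) c2.
  have hB2 := B_le k (n - c) l.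
  have hs := @Hstep k n k10 kn'.
  rewrite -/c in hs.
  have hX0 : 0 <= 4%:R ^+ t :> rat by apply: exprn_ge0; rewrite ler0n.
  have hX1 : 1 <= 4%:R ^+ t :> rat by apply: exprn_ege1; rewrite ler1n.
  have I2' := le_trans I2 (ler_wpM2l hX0 hB2).
  rewrite hB1 bflagE in I1.
  rewrite -addn1 !natrD.
  rewrite /B (negbTE nd).
  case: ifP => hl; rewrite hl in I1.
  + destruct t as [|t']; first by case: tn.
    rewrite subn1 /= in I1 *.
    rewrite exprS in hX0 hX1 I2' *.
    have hY : 1 <= 4%:R ^+ t' :> rat by apply: exprn_ege1; rewrite ler1n.
    move: I1 I2' hs hY; set Y := 4%:R ^+ t'; set Hm := H (n - k); set Hm' := H _.
    clearbody Y Hm Hm' => *; nra.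
  + rewrite subn0 in I1.
    have hH := H_ge2 (n - k).
    move: I1 I2' hs hX1 hH; set Y := 4%:R ^+ t; set Hm := H (n - k); set Hm' := H _.
    clearbody Y Hm Hm' => h1 h2 h3 h4 h5.
    have hp : 1 <= Y * (Hm/2 - Hm' - 1) by apply: mulr_ege1 => //; lra.
    nra.
Qed.

End BoundPart.
Section ExPart.

Lemma ex_step k M : (10 <= k)%N ->
  (forall n l t, (n - k < M)%N -> Inv k n l -> exists N, calls k n l t N) ->
  forall t n l, (n - k <= M)%N -> Inv k n l -> exists N, calls k n l t N.
Proof.
move=> k10 IHM t; elim/ltn_ind: t => t IHt.
have REC : forall n l, (n - k <= M)%N -> Inv k n l -> ~~ dn k n l -> ~ (n = k /\ l = 1%N) ->
    t <> 0%N -> (exists N, calls k n (lstar k n) (t - bflag n l) N) ->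
    exists N, calls k n l t N.
  move=> n l hM inv nd nb tn [N1 h1].
  have kn : (k <= n)%N by case: inv.
  have kn' : (k < n)%N by apply: (@rec_m k n l k10 inv nd nb).
  have [N2 h2] : exists N2, calls k (n - lstar k n) l t N2.
    apply: IHM; rewrite lstarE //; first lia.
    exact: (@inv_sub2 k n l k10 inv nd kn').
  exists (N1 + N2).+1; apply: calls_rec => //; by rewrite dualE.
have SND : forall n l, (n - k <= M)%N -> Inv k n l -> ~~ dn k n l -> (2 * l < n)%N ->
    exists N, calls k n l t N.
  move=> n l hM inv nd hl.
  have kn : (k <= n)%N by case: inv.
  have nd' : ~~ dual_cond k n l by rewrite dualE.
  case: (boolP ((n == k) && (l == 1%N))) => [/andP [/eqP e1 /eqP e2]|nb].
    by exists 1%N; apply: calls_baseA.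
  have nb' : ~ (n = k /\ l = 1%N) by case=> e1 e2; move: nb; rewrite e1 e2 !eqxx.
  case: (posnP t) => [t0|tp].
    by exists 1%N; apply: calls_baseB.
  have tn : t <> 0%N by move=> e; rewrite e in tp.
  apply: REC => //.
  have kn' : (k < n)%N by apply: (@rec_m k n l k10 inv nd nb').
  rewrite bflagE hl lstarE //.
  apply: IHt; first lia.
    lia.
  exact: (@inv_sub1 k n l k10 inv kn').
have ND : forall n l, (n - k <= M)%N -> Inv k n l -> ~~ dn k n l ->
    exists N, calls k n l t N.
  move=> n l hM inv nd.
  case: (boolP (2 * l < n)%N) => hl; first exact: SND.
  have kn : (k <= n)%N by case: inv.
  have nd' : ~~ dual_cond k n l by rewrite dualE.
  case: (boolP ((n == k) && (l == 1%N))) => [/andP [/eqP e1 /eqP e2]|nb].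
    by exists 1%N; apply: calls_baseA.
  have nb' : ~ (n = k /\ l = 1%N) by case=> e1 e2; move: nb; rewrite e1 e2 !eqxx.
  case: (posnP t) => [t0|tp].
    by exists 1%N; apply: calls_baseB.
  have tn : t <> 0%N by move=> e; rewrite e in tp.
  apply: REC => //.
  have kn' : (k < n)%N by apply: (@rec_m k n l k10 inv nd nb').
  rewrite bflagE (negbTE hl) subn0 lstarE //.
  apply: SND => //.
  - exact: (@inv_sub1 k n l k10 inv kn').
  - exact: (@inv_sub1b k n l k10 inv kn').
  - exact: (@inv_sub1c k n k10 kn').
move=> n l hM inv.
case: (boolP (dn k n l)) => d; last exact: ND.
have kn : (k <= n)%N by case: inv.
have [N h] := ND n (n - l) hM (@inv_dual k n l k10 inv d) (@inv_dual2 k n l k10 inv d).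
exists N.+1; apply: calls_dual => //; by rewrite dualE.
Qed.

Lemma ex_all k : (10 <= k)%N -> forall M t n l, (n - k <= M)%N -> Inv k n l -> exists N, calls k n l t N.
Proof.
move=> k10 M; elim/ltn_ind: M => M IH t n l hM inv.
apply: (@ex_step k M k10 _ t n l hM inv) => n' l' t' h inv'.
exact: (IH (n' - k)%N h t' n' l' (leqnn _) inv').
Qed.

End ExPart.

Theorem mainTheorem3 :
  exists p : {poly rat},
  forall k n l t : nat,
    (10 <= k)%N -> (k <= n)%N -> (1 <= l)%N -> (l <= n - k + 1)%N ->
    (exists N, calls k n l t N) /\
    (forall N, calls k n l t N -> (N%:R <= 4%:R ^+ t * p.[n%:R])%R).
Proof.
exists (('X + 1) ^+ 24 + 1)%R.
move=> k n l t k10 kn l1 lnk.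
have inv : Inv k n l by split; lia.
split; first exact: (@ex_all k k10 (n - k) t n l (leqnn _) inv).
move=> N hc.
have hb := @bound k n l t N k10 hc inv.
have hB := B_le k n l.
have hX0 : (0 <= 4%:R ^+ t :> rat)%R by apply: exprn_ge0; rewrite ler0n.
apply: (le_trans hb); apply: (le_trans (ler_wpM2l hX0 hB)); apply: ler_wpM2l => //.
rewrite /H !hornerE.
rewrite lerD2r; apply: lerXn2r; rewrite ?nnegrE ?natr1 ?ler0n ?ler_nat //; lia.
Qed.
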